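(* Let $\mathcal C\subseteq\{0,1\}^n$ and $\mathcal D\subseteq\{0,1\}^m$ be neural codes and $\phi:R_\mathcal D\to R_\mathcal C$ a ring homomorphism. Then $\phi$ is a neural ring homomorphism if and only if there is a vector $S=(s_1,\dots,s_m)$ with $s_i\in[n]\cup\{0,u\}$ such that $q_\phi=q_S|_\mathcal C$.
   Context: For a code $\mathcal C\subseteq\{0,1\}^n$, $R_\mathcal C$ is the ring of functions $\mathcal C\to\mathbb F_2$ and $R[n]=R_{\{0,1\}^n}=\mathbb F_2[x_1,\dots,x_n]/\langle x_i^2-x_i\rangle$; $R_\mathcal C$ is an $R[n]$-module via $(r\cdot f)(c)=r(c)f(c)$. $\rho_d$ is the indicator of $\{d\}$, and $q_\phi:\mathcal C\to\mathcal D$ sends $c$ to the unique $d\in\mathcal D$ with $\phi(\rho_d)(c)=1$. A ring homomorphism $\tau:R[m]\to R[n]$ is compatible with $\phi$ if $\phi(r\cdot f)=\tau(r)\cdot\phi(f)$ for all $r\in R[m]$, $f\in R_\mathcal D$; it is linear-monomial if $\tau(x_i)\in\{x_1,\dots,x_n,0,1\}$ for every $i$. $\phi$ is a neural ring homomorphism if some linear-monomial $\tau:R[m]\to R[n]$ is compatible with $\phi$. For $S=(s_1,\dots,s_m)$ with $s_i\in[n]\cup\{0,u\}$ ($u$ a formal symbol), $q_S:\{0,1\}^n\to\{0,1\}^m$ is $q_S(c)=d$ with $d_i=c_j$ if $s_i=j$, $d_i=0$ if $s_i=0$, $d_i=1$ if $s_i=u$. *)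

(* Defs.v *)
From HB Require Import structures.
From mathcomp Require Import all_boot all_algebra.
Set Implicit Arguments. Unset Strict Implicit. Unset Printing Implicit Defensive.
Import GRing.Theory.
Local Open Scope ring_scope.

Definition bvec (n : nat) := {ffun 'I_n -> bool}.

Definition cwords (n : nat) (C : {set bvec n}) := {c : bvec n | c \in C}.

Definition RC (n : nat) (C : {set bvec n}) := {ffun cwords C -> 'F_2}.

(* R[n] = F_2[x_1..x_n]/<x_i^2 - x_i>, realized as functions {0,1}^n -> F_2. *)
Definition Rn (n : nat) := {ffun bvec n -> 'F_2}.

Definition xvar (n : nat) (i : 'I_n) : Rn n := [ffun c : bvec n => (c i)%:R].

Definition act (n : nat) (C : {set bvec n}) (r : Rn n) (f : RC C) : RC C :=
  [ffun c => r (val c) * f c].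

Definition rho (m : nat) (D : {set bvec m}) (d : cwords D) : RC D :=
  [ffun d' => (d' == d)%:R].

(* q_phi c = the unique d in D with phi(rho_d)(c) = 1
   (None if no such d exists, which never happens for ring homomorphisms). *)
Definition qphi (n m : nat) (C : {set bvec n}) (D : {set bvec m})
  (phi : RC D -> RC C) (c : cwords C) : option (bvec m) :=
  omap val [pick d : cwords D | phi (rho d) c == 1].

Definition compatible (n m : nat) (C : {set bvec n}) (D : {set bvec m})
  (phi : RC D -> RC C) (tau : Rn m -> Rn n) : Prop :=
  forall (r : Rn m) (f : RC D), phi (act r f) = act (tau r) (phi f).

Definition linear_monomial (n m : nat) (tau : Rn m -> Rn n) : Prop :=
  forall i : 'I_m,
    (exists j : 'I_n, tau (xvar i) = xvar j) \/ tau (xvar i) = 0 \/ tau (xvar i) = 1.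

Definition neural_ring_hom (n m : nat) (C : {set bvec n}) (D : {set bvec m})
  (phi : RC D -> RC C) : Prop :=
  exists tau : {rmorphism Rn m -> Rn n},
    linear_monomial tau /\ compatible phi tau.

Inductive sym (n : nat) := SVar of 'I_n | SZero | SU.

Definition qS (n m : nat) (S : 'I_m -> sym n) (c : bvec n) : bvec m :=
  [ffun i => match S i with SVar j => c j | SZero => false | SU => true end].

(* Main.v *)
Require Import Defs.
From HB Require Import structures.
From mathcomp Require Import all_boot all_algebra.
Set Implicit Arguments. Unset Strict Implicit. Unset Printing Implicit Defensive.
Import GRing.Theory.
Local Open Scope ring_scope.

Lemma F2_cases (x : 'F_2) : x = 0 \/ x = 1.
Proof. case: x => [[|[|k]] Hk]; [left|right|by []]; exact: val_inj. Qed.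

Lemma F2_01 : (0 : 'F_2) != 1. Proof. by []. Qed.

Lemma mulfE (T : finType) (f g : {ffun T -> 'F_2}) x : (f * g) x = f x * g x.
Proof. by rewrite ffunE. Qed.

Lemma onefE (T : finType) x : (1 : {ffun T -> 'F_2}) x = 1.
Proof. by rewrite ffunE. Qed.

Lemma natb_inj (b b' : bool) : (b%:R : 'F_2) = b'%:R -> b = b'.
Proof. by case: b; case: b'. Qed.

Lemma phi_eval n m (C : {set bvec n}) (D : {set bvec m})
  (phi : {rmorphism RC D -> RC C}) c d (g : RC D) :
  phi (rho d) c = 1 -> phi g c = g d.
Proof.
move=> H1.
have E : phi g c = phi g c * phi (rho d) c by rewrite H1 mulr1.
rewrite E -mulfE -rmorphM.
case: (F2_cases (g d)) => Hg; rewrite Hg.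
- have -> : g * rho d = 0.
    apply/ffunP => d'; rewrite mulfE !ffunE.
    by case: (boolP (_ == _)) => [/eqP ->|_]; rewrite ?Hg ?mul0r ?mulr0.
  by rewrite rmorph0 ffunE.
- have -> : g * rho d = rho d.
    apply/ffunP => d'; rewrite mulfE !ffunE.
    by case: (boolP (_ == _)) => [/eqP ->|_]; rewrite ?Hg ?mulr0 ?mulr1.
  by [].
Qed.

Lemma phi_exists n m (C : {set bvec n}) (D : {set bvec m})
  (phi : {rmorphism RC D -> RC C}) c : exists d, phi (rho d) c = 1.
Proof.
have Hs : \sum_d rho d = 1 :> RC D.
  apply/ffunP => d'; rewrite sum_ffunE onefE (bigD1 d') //= ffunE eqxx big1 ?addr0 //.
  by move=> i Hi; rewrite ffunE eq_sym (negbTE Hi).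
have := congr1 (fun f : RC C => f c) (congr1 phi Hs).
rewrite /= rmorph_sum sum_ffunE rmorph1 onefE.
case: (pickP (fun d => phi (rho d) c == 1)) => [d /eqP Hd|Hn]; first by exists d.
rewrite big1 => [H|i _]; first by move: F2_01; rewrite H eqxx.
by case: (F2_cases (phi (rho i) c)) => // H; move: (Hn i); rewrite H eqxx.
Qed.

Definition pull n m (S : 'I_m -> sym n) (r : Rn m) : Rn n := [ffun c => r (qS S c)].

Fact pull_zmod n m (S : 'I_m -> sym n) : zmod_morphism (pull S).
Proof. by move=> x y; apply/ffunP => c; rewrite !ffunE. Qed.

Fact pull_monoid n m (S : 'I_m -> sym n) : monoid_morphism (pull S).
Proof. by split; [apply/ffunP => c; rewrite !ffunE | move=> x y; apply/ffunP => c; rewrite !ffunE]. Qed.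

HB.instance Definition _ n m (S : 'I_m -> sym n) :=
  GRing.isZmodMorphism.Build (Rn m) (Rn n) (pull S) (pull_zmod S).
HB.instance Definition _ n m (S : 'I_m -> sym n) :=
  GRing.isMonoidMorphism.Build (Rn m) (Rn n) (pull S) (pull_monoid S).

Theorem lemma7 (n m : nat) (C : {set bvec n}) (D : {set bvec m})
  (phi : {rmorphism RC D -> RC C}) :
  neural_ring_hom phi <->
  exists S : 'I_m -> sym n, forall c : cwords C, qphi phi c = Some (qS S (val c)).
Proof.
split.
- case=> tau [Hlm Hcomp].
  exists (fun i => if [pick j | tau (xvar i) == xvar j] is Some j then SVar j
                   else if tau (xvar i) == 0 then SZero n else SU n).
  move=> c; rewrite /qphi.
  case: pickP => [d /eqP Hd|Hn]; last first.
    by case: (phi_exists phi c) => d Hd; move: (Hn d); rewrite Hd eqxx.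
  congr Some; apply/ffunP => i; rewrite ffunE.
  have Ht : tau (xvar i) (val c) = (val d i)%:R.
    have := phi_eval (act (xvar i) (rho d)) Hd.
    rewrite Hcomp ffunE Hd mulr1 => ->.
    by rewrite !ffunE eqxx mulr1.
  case: pickP => [j /eqP Hj|Hn].
    by move: Ht; rewrite Hj ffunE => /natb_inj.
  case: eqP => [H0|H0].
    by move: Ht; rewrite H0 ffunE => /(natb_inj (b:=false)).
  case: (Hlm i) => [[j Hj]|[H|H]]; first by move: (Hn j); rewrite Hj eqxx.
    by [].
  by move: Ht; rewrite H onefE => /(natb_inj (b:=true)).
- case=> S HS; exists (pull S); split.
    move=> i; rewrite /pull.
    case E: (S i) => [j||].
    + left; exists j; apply/ffunP => c; rewrite !ffunE E //.
    + right; left; apply/ffunP => c; rewrite !ffunE E //.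
    + right; right; apply/ffunP => c; rewrite !ffunE E //.
  move=> r f; apply/ffunP => c.
  move: (HS c); rewrite /qphi.
  case: pickP => [d /eqP Hd|//] [Hv].
  rewrite [RHS]ffunE (phi_eval _ Hd) (phi_eval f Hd) ffunE /pull ffunE.
  by rewrite -Hv.
Qed.
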